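(* Let $\lambda_0\in\mathbb D\setminus\{0\}$ and $y^0=(y_1^0,y_2^0,q^0)\in\widetilde{\mathbb G}_3$ with $y^0_1y^0_2\ne9q^0$, $|y^0_2|\le|y^0_1|$ and $\|\Phi_1(\cdot,y^0)\|_{H^\infty}<|\lambda_0|$. For $\nu>0$ let $Z_\nu=\begin{bmatrix}y^0_1/(3\lambda_0)&\nu w\\ \nu^{-1}w&y^0_2/3\end{bmatrix}$, where $w^2=\frac{y^0_1y^0_2-9q^0}{9\lambda_0}$. Let $\theta_1,\theta_2$ be the roots of $z+1/z=\frac{|\lambda_0|}{|y^0_1y^0_2-9q^0|}\left(9-\frac{|y^0_1|^2}{|\lambda_0|^2}-|y^0_2|^2+\frac{9|q^0|^2}{|\lambda_0|^2}\right)$. Then for every $\nu>0$ with $\theta_1<\nu^2<\theta_2$ we have $\|Z_\nu\|<1$ and the matrix $\mathcal K_{Z_\nu}(|\lambda_0|)$ is not positive definite.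
   Context: $\mathbb D$ open unit disc, $\|\cdot\|$ operator norm. $\widetilde{\mathbb G}_3=\{(\beta_1+\bar\beta_2q,\beta_2+\bar\beta_1q,q): q\in\mathbb D,\ |\beta_1|+|\beta_2|<3\}$. For $y=(y_1,y_2,q)$, $\Phi_1(z,y)=\frac{3qz-y_1}{y_2z-3}$ if $y_2z\ne3$ and $y_1y_2\ne9q$, $\Phi_1(z,y)=y_1/3$ if $y_1y_2=9q$; $\|\Phi_1(\cdot,y)\|_{H^\infty}=\sup_{z\in\mathbb D}|\Phi_1(z,y)|$. For a $2\times2$ matrix $Z$ with $\|Z\|<1$ and $0\le\rho<1$, $\mathcal K_Z(\rho)=\begin{bmatrix}[(1-\rho^2Z^*Z)(1-Z^*Z)^{-1}]_{11}&[(1-\rho^2)(1-ZZ^* )^{-1}Z]_{21}\\ [(1-\rho^2)Z^*(1-ZZ^* )^{-1}]_{12}&[(ZZ^*-\rho^2)(1-ZZ^* )^{-1}]_{22}\end{bmatrix}$. *)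

(* Defs.v *)
From HB Require Import structures.
From mathcomp Require Import all_boot all_order all_algebra.
From mathcomp Require Import all_classical all_reals ereal.
From mathcomp Require Import complex.
Set Implicit Arguments. Unset Strict Implicit. Unset Printing Implicit Defensive.
Import Order.TTheory GRing.Theory Num.Theory.
Local Open Scope ring_scope.
Local Open Scope classical_set_scope.
Local Open Scope ereal_scope.
Local Open Scope ring_scope.

Section Defs.
Variable R : realType.
Local Notation C := R[i].

Definition cabs (z : C) : R := Normc.normc z.

Definition unit_disc : set C := [set z | cabs z < 1].

Definition tG3 (y1 y2 q : C) : Prop :=
  cabs q < 1 /\
  exists b1 b2 : C, cabs b1 + cabs b2 < 3 /\
    y1 = b1 + (conjc b2) * q /\ y2 = b2 + (conjc b1) * q.

(* Phi_1(z, y); for y1*y2 <> 9q and y2 z = 3 the value is the MathComp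
   convention (division by 0 gives 0); this case never occurs on the disc. *)
Definition Phi1 (z y1 y2 q : C) : C :=
  if y1 * y2 == 9 * q then y1 / 3 else (3 * q * z - y1) / (y2 * z - 3).

Definition Hinf_Phi1 (y1 y2 q : C) : \bar R :=
  ereal_sup [set (cabs (Phi1 z y1 y2 q))%:E | z in unit_disc].

Definition vnorm (v : 'cV[C]_2) : R := Num.sqrt (\sum_i (cabs (v i 0)) ^+ 2).

Definition opnorm (Z : 'M[C]_2) : R :=
  sup [set vnorm (Z *m v) | v in [set v : 'cV[C]_2 | vnorm v = 1]].

Definition adjM {m n} (A : 'M[C]_(m, n)) : 'M[C]_(n, m) := (map_mx conjc A)^T.

Definition posdef (K : 'M[C]_2) : Prop :=
  forall v : 'cV[C]_2, v != 0 -> 0 < (adjM v *m K *m v) 0 0.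

Definition KZ (Z : 'M[C]_2) (rho : R) : 'M[C]_2 :=
  let r2 : C := ((rho ^+ 2)%:C)%C in
  let ZsZ := adjM Z *m Z in
  let ZZs := Z *m adjM Z in
  let A := (1 - r2 *: ZsZ) *m invmx (1 - ZsZ) in
  let B := ((1 - r2) *: invmx (1 - ZZs)) *m Z in
  let Cm := ((1 - r2) *: adjM Z) *m invmx (1 - ZZs) in
  let D := (ZZs - r2%:M) *m invmx (1 - ZZs) in
  \matrix_(i < 2, j < 2)
    if (i == 0 :> nat) then (if (j == 0 :> nat) then A 0 0 else B 1 0)
    else (if (j == 0 :> nat) then Cm 0 1 else D 1 1).

Definition Znu (y1 y2 lam w : C) (nu : R) : 'M[C]_2 :=
  \matrix_(i < 2, j < 2)
    if (i == 0 :> nat) then (if (j == 0 :> nat) then y1 / (3 * lam) else (nu%:C)%C * w)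
    else (if (j == 0 :> nat) then ((nu^-1)%:C)%C * w else y2 / 3).

End Defs.

(* Main.v *)
Require Import Defs.
From HB Require Import structures.
From mathcomp Require Import all_boot all_order all_algebra.
From mathcomp Require Import all_classical all_reals ereal.
From mathcomp Require Import complex.
From mathcomp Require Import ring lra.
Import Order.TTheory GRing.Theory Num.Theory.
Local Open Scope ring_scope.

Section Helpers.
Local Open Scope complex_scope.
Context {R : realType}.
Local Notation C := R[i].


Definition mx2 (a b c d : C) : 'M[C]_2 :=
  \matrix_(i < 2, j < 2)
    if (i == 0 :> nat) then (if (j == 0 :> nat) then a else b)
    else (if (j == 0 :> nat) then c else d).
Ltac mxcase := apply/matrixP; case => [[|[|?]] ?] [[|[|?]] ?];
  rewrite !mxE ?big_ord_recl ?big_ord0 ?mxE //=.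
Lemma mx2_mul a b c d a' b' c' d' :
  mx2 a b c d *m mx2 a' b' c' d' = mx2 (a*a' + b*c') (a*b'+b*d') (c*a'+d*c') (c*b'+d*d').
Proof. by mxcase; rewrite addr0. Qed.
Lemma mx2_add a b c d a' b' c' d' :
  mx2 a b c d + mx2 a' b' c' d' = mx2 (a + a') (b + b') (c + c') (d + d').
Proof. by mxcase. Qed.
Lemma mx2_opp a b c d : - mx2 a b c d = mx2 (-a) (-b) (-c) (-d).
Proof. by mxcase. Qed.
Lemma mx2_scale k a b c d : k *: mx2 a b c d = mx2 (k*a) (k*b) (k*c) (k*d).
Proof. by mxcase. Qed.
Lemma mx2_scalar k : k%:M = mx2 k 0 0 k.
Proof. by mxcase. Qed.
Lemma mx2_one : 1 = mx2 1 0 0 1 :> 'M[C]_2.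
Proof. by mxcase. Qed.
Lemma mx2_adj a b c d : adjM (mx2 a b c d) = mx2 (conjc a) (conjc c) (conjc b) (conjc d).
Proof. by rewrite /adjM; mxcase. Qed.
Lemma mx2_inv a b c d : a * d - b * c != 0 ->
  invmx (mx2 a b c d) = mx2 (d / (a*d-b*c)) (- b / (a*d-b*c)) (- c / (a*d-b*c)) (a / (a*d-b*c)).
Proof.
move=> H.
have E : mx2 a b c d *m mx2 (d / (a*d-b*c)) (- b / (a*d-b*c)) (- c / (a*d-b*c)) (a / (a*d-b*c)) = 1.
  rewrite mx2_mul mx2_one; congr mx2; field; done.
have [U _] := mulmx1_unit E.
by rewrite -[RHS]mul1mx -(mulVmx U) -mulmxA E mulmx1.
Qed.

Lemma KZ_mx2 (Z : 'M[C]_2) r : KZ Z r =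
  let r2 : C := ((r ^+ 2)%:C)%C in
  let ZsZ := adjM Z *m Z in
  let ZZs := Z *m adjM Z in
  mx2 (((1 - r2 *: ZsZ) *m invmx (1 - ZsZ)) 0 0)
      ((((1 - r2) *: invmx (1 - ZZs)) *m Z) 1 0)
      ((((1 - r2) *: adjM Z) *m invmx (1 - ZZs)) 0 1)
      (((ZZs - r2%:M) *m invmx (1 - ZZs)) 1 1).
Proof. by []. Qed.
Lemma mx2_inv' {D : C} {a b c d : C} : D != 0 -> a * d - b * c = D ->
  invmx (mx2 a b c d) = mx2 (d / D) (- b / D) (- c / D) (a / D).
Proof. by move=> H E; move: H; rewrite -E; apply: mx2_inv. Qed.
Lemma mx2E (a b c d : C) : (mx2 a b c d 0 0 = a) * (mx2 a b c d 0 1 = b) *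
   (mx2 a b c d 1 0 = c) * (mx2 a b c d 1 1 = d).
Proof. by rewrite !mxE. Qed.


Lemma cabs_sqC (x : C) : ((cabs x)%:C)^+2 = x * conjc x.
Proof.
case: x => a b; rewrite /cabs /=; simpc. rewrite -rmorphXn /= sqr_sqrtr ?addr_ge0 ?sqr_ge0 //.
congr (_ +i* _); ring.
Qed.
Definition cv2 (x y : C) : 'cV[C]_2 := \matrix_(i < 2, j < 1) if (i == 0 :> nat) then x else y.
Lemma quad2 (x y k00 k01 k10 k11 : C) :
  (adjM (cv2 x y) *m mx2 k00 k01 k10 k11 *m cv2 x y) 0 0 =
  conjc x * (k00 * x + k01 * y) + conjc y * (k10 * x + k11 * y).
Proof. rewrite /adjM !mxE !big_ord_recl !big_ord0 !mxE !big_ord_recl !big_ord0 !mxE /=. ring. Qed.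
Lemma cv2_neq0 (x y : C) : y != 0 -> cv2 x y != 0.
Proof. by move=> Hy; apply/eqP => /matrixP/(_ 1 0); rewrite !mxE /=; apply/eqP. Qed.
Lemma cv2_neq0x (x y : C) : x != 0 -> cv2 x y != 0.
Proof. by move=> Hy; apply/eqP => /matrixP/(_ 0 0); rewrite !mxE /=; apply/eqP. Qed.
Lemma notpd2 (k00 k01 k10 k11 : C) (k dk : R) : k00 = k%:C ->
  k00 * k11 - k10 * k01 = dk%:C -> dk < 0 -> ~ posdef (mx2 k00 k01 k10 k11).
Proof.
move=> h0 hd hneg Hpd.
case: (lerP k 0) => hk.
  have := Hpd (cv2 1 0) (cv2_neq0x 1 0 (oner_neq0 _)).
  rewrite quad2 conjc1 conjc0 h0 !(mulr0, mul0r, mulr1, mul1r, addr0) ltcR.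
  by rewrite ltNge hk.
have := Hpd (cv2 (- k01) k00).
rewrite quad2.
have -> : conjc (- k01) * (k00 * - k01 + k01 * k00) + conjc k00 * (k10 * - k01 + k11 * k00)
   = conjc k00 * (k00 * k11 - k10 * k01) by ring.
rewrite hd h0 conjc_real -rmorphM ltcR => H.
have : 0 < k * dk.
  apply: H; apply: cv2_neq0; apply/eqP => /complexI; apply/eqP; exact: lt0r_neq0.
rewrite pmulr_rgt0 //; by rewrite ltNge (ltW hneg).
Qed.

Lemma cabs_sqR (x : C) : ((cabs x)^+2)%:C = x * conjc x.
Proof. by rewrite rmorphXn cabs_sqC. Qed.
Lemma rCD (x y : R) : (x + y)%:C = x%:C + y%:C :> C. Proof. exact: rmorphD. Qed.
Lemma rCB (x y : R) : (x - y)%:C = x%:C - y%:C :> C. Proof. exact: rmorphB. Qed.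
Lemma rCN (x : R) : (- x)%:C = - x%:C :> C. Proof. exact: rmorphN. Qed.
Lemma rCM (x y : R) : (x * y)%:C = x%:C * y%:C :> C. Proof. exact: rmorphM. Qed.
Lemma rCV (x : R) : (x^-1)%:C = (x%:C)^-1 :> C. Proof. exact: fmorphV. Qed.
Lemma rC1 : (1 : R)%:C = 1 :> C. Proof. exact: rmorph1. Qed.
Lemma rC0 : (0 : R)%:C = 0 :> C. Proof. exact: rmorph0. Qed.
Lemma rCX (x : R) n : (x ^+ n)%:C = (x%:C) ^+ n :> C. Proof. exact: rmorphXn. Qed.
Lemma rCn n : (n%:R : R)%:C = n%:R :> C. Proof. exact: rmorph_nat. Qed.
Lemma cJB (x y : C) : conjc (x - y) = conjc x - conjc y. Proof. exact: rmorphB. Qed.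
Lemma cJD (x y : C) : conjc (x + y) = conjc x + conjc y. Proof. exact: rmorphD. Qed.
Lemma cJM (x y : C) : conjc (x * y) = conjc x * conjc y. Proof. exact: rmorphM. Qed.
Lemma cJN (x : C) : conjc (- x) = - conjc x. Proof. exact: rmorphN. Qed.
Ltac pushC := rewrite ?(cabs_sqR, rCD, rCB, rCN, rCM, rCV, rC1, rC0, rCX, cJB, cJD, cJM, cJN, conjc_real, conjcK, conjc1, conjc0, conjc_nat, rCn).

Lemma KZ_notpd (a b c d : C) (r : R) :
  0 < 1 - cabs a ^+ 2 - cabs b ^+ 2 - cabs c ^+ 2 - cabs d ^+ 2 + cabs (a * d - b * c) ^+ 2 ->
  0 < r -> r <= 1 -> cabs d ^+ 2 <= r ^+ 2 * cabs a ^+ 2 ->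
  ~ posdef (KZ (mx2 a b c d) r).
Proof.
set dl := (1 - cabs a ^+ 2 - cabs b ^+ 2 - cabs c ^+ 2 - cabs d ^+ 2 + cabs (a * d - b * c) ^+ 2) => hdl hr0 hr1 hda.
have hdC : dl%:C = 1 - a * conjc a - b * conjc b - c * conjc c - d * conjc d
   + (a * d - b * c) * (conjc a * conjc d - conjc b * conjc c).
  rewrite /dl; pushC; ring.
have HD : dl%:C != 0 by rewrite fmorph_eq0 lt0r_neq0.
rewrite KZ_mx2 /= !mx2_adj !mx2_mul mx2_one mx2_scalar !mx2_scale !mx2_opp !mx2_add.
rewrite !(mulr0, mul0r, add0r, addr0, mulr1, subr0, sub0r).
rewrite (mx2_inv' HD); last by rewrite hdC; ring.
rewrite (mx2_inv' HD); last by rewrite hdC; ring.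
rewrite !mx2_scale !mx2_mul !mx2E.
apply: (@notpd2 _ _ _ _ (r ^+ 2 + (1 - r ^+ 2) * (1 - cabs b ^+ 2 - cabs d ^+ 2) / dl)
   ((- r ^+ 2 * dl + (1 - r ^+ 2) * cabs d ^+ 2 - (1 - r ^+ 2) * cabs a ^+ 2 * r ^+ 2) / dl)).
- pushC. field. by rewrite -hdC.
- pushC. field. by rewrite -hdC.
- rewrite pmulr_llt0 ?invr_gt0 //.
  have h1 : 0 <= 1 - r ^+ 2.
    rewrite subr_ge0 expr_le1 // ltW //.
  have h2 : (1 - r ^+ 2) * (cabs d ^+ 2 - r ^+ 2 * cabs a ^+ 2) <= 0.
    by rewrite mulr_ge0_le0 // subr_le0.
  have h3 : 0 < r ^+ 2 * dl by rewrite mulr_gt0 ?exprn_gt0.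
  lra.
Qed.
Lemma cabs_ge0 (x : C) : 0 <= cabs x.
Proof. case: x => a b; exact: sqrtr_ge0. Qed.
Lemma cabsM (x y : C) : cabs (x * y) = cabs x * cabs y.
Proof. exact: Normc.normcM. Qed.
Lemma cabsV (x : C) : cabs (x^-1) = (cabs x)^-1.
Proof. exact: Normc.normcV. Qed.
Lemma cabsD (x y : C) : cabs (x + y) <= cabs x + cabs y.
Proof. exact: le_normcD. Qed.
Lemma cabsN (x : C) : cabs (- x) = cabs x.
Proof. exact: normcN. Qed.
Lemma cabsJ (x : C) : cabs (conjc x) = cabs x.
Proof. by case: x => a b; rewrite /cabs /= sqrrN. Qed.
Lemma cabs_real (x : R) : cabs (x%:C) = `|x|.
Proof. by rewrite /cabs /= expr0n addr0 sqrtr_sqr. Qed.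
Lemma cabs_nat n : cabs (n%:R : C) = n%:R.
Proof. by rewrite -rCn cabs_real ger0_norm. Qed.
Lemma cabs0 : cabs (0 : C) = 0. Proof. exact: Normc.normc0. Qed.
Lemma cabs1 : cabs (1 : C) = 1. Proof. exact: Normc.normc1. Qed.
Lemma cabs_eq0 (x : C) : (cabs x == 0) = (x == 0).
Proof.
apply/eqP/eqP; last by move=> ->; exact: Normc.normc0.
exact: Normc.eq0_normc.
Qed.
Lemma cabs_gt0 (x : C) : x != 0 -> 0 < cabs x.
Proof. by move=> h; rewrite lt_def cabs_ge0 cabs_eq0 h. Qed.

Lemma Q_le_L (y1 y2 q : C) (L : R) : 0 <= L -> L < 1 ->
  tG3 y1 y2 q -> y1 * y2 != 9 * q -> cabs y2 <= cabs y1 ->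
  (Hinf_Phi1 y1 y2 q < L%:E)%E -> cabs q <= L.
Proof.
move=> hL0 hL1 [hq [b1 [b2 [hb [hy1 hy2]]]]] hne hY hinf.
have hY2 : cabs y2 < 3.
  have := cabsD b2 (conjc b1 * q); rewrite -hy2 cabsM cabsJ.
  have := cabs_ge0 b1; have := cabs_ge0 q. nra.
rewrite leNgt; apply/negP => hQL.
set m := q * conjc y1 - (L ^+ 2)%:C * y2.
set M := cabs m.
have [u [hu1 hum]] : exists u : C, cabs u = 1 /\ u * m = - M%:C.
  case: (eqVneq m 0) => hm.
    exists 1; split; first exact: Normc.normc1.
    by rewrite /M hm mulr0 cabs0 rC0 oppr0.
  have hM : 0 < M by exact: cabs_gt0.
  exists (- conjc m / M%:C); split.
    by rewrite cabsM cabsN cabsJ cabsV cabs_real gtr0_norm // mulfV // gt_eqF.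
  have hMC : M%:C != 0 by rewrite fmorph_eq0 gt_eqF.
  have E : conjc m * m = M%:C ^+ 2 by rewrite mulrC -rCX cabs_sqR.
  rewrite mulrAC mulNr E; field; exact: hMC.
have hM0 : 0 <= M by exact: cabs_ge0.
have hQ0 : 0 <= cabs q by exact: cabs_ge0.
have hY20 : 0 <= cabs y2 by exact: cabs_ge0.
have hY10 : 0 <= cabs y1 by exact: cabs_ge0.
set A := 9 * cabs q ^+ 2 - L ^+ 2 * cabs y2 ^+ 2.
set f1 := A + 6 * M + (cabs y1 ^+ 2 - 9 * L ^+ 2).
have hA : 0 < A.
  have : L ^+ 2 * cabs y2 ^+ 2 <= L ^+ 2 * 9.
    apply: ler_wpM2l; first exact: sqr_ge0. nra.
  rewrite /A; nra.
have hf1 : 0 < f1.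
  have : L ^+ 2 * cabs y2 ^+ 2 <= cabs y1 ^+ 2.
    have hL2 : L ^+ 2 <= 1 by nra.
    have : L ^+ 2 * cabs y2 ^+ 2 <= cabs y2 ^+ 2.
      rewrite -[X in _ <= X]mul1r; apply: ler_wpM2r => //; exact: sqr_ge0.
    have : cabs y2 ^+ 2 <= cabs y1 ^+ 2 by nra.
    lra.
  rewrite /f1 /A; nra.
set P := 2 * A + 6 * M.
set S := f1 + P.
have hP : 0 < P by rewrite /P; lra.
have hS : 0 < S by rewrite /S; lra.
set r := P / S.
have hrS : r * S = P by rewrite /r mulfVK // gt_eqF.
have hr0 : 0 < r by rewrite /r divr_gt0.
have hr1 : r < 1 by rewrite /r ltr_pdivrMr // mul1r /S; lra.
have hfr : 0 < r ^+ 2 * A + (cabs y1 ^+ 2 - 9 * L ^+ 2) + 6 * r * M.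
  have e1 : (1 - r) * S = f1 by rewrite mulrBl hrS mul1r /S; ring.
  have e2 : r ^+ 2 * A + (cabs y1 ^+ 2 - 9 * L ^+ 2) + 6 * r * M = f1 - (1 - r) * (A * (1 + r) + 6 * M).
    by rewrite /f1; ring.
  have e3 : (1 - r) * (A * (1 + r) + 6 * M) <= (1 - r) * P.
    apply: ler_wpM2l; first lra. rewrite /P; nra.
  have e4 : (1 - r) * P < (1 - r) * S.
    rewrite ltr_pM2l; [rewrite /S; lra | lra].
  lra.
clearbody r.
set z := r%:C * u.
have hz : cabs z = r by rewrite /z cabsM cabs_real hu1 mulr1 gtr0_norm.
have huu : u * conjc u = 1 by rewrite -cabs_sqC hu1 rC1 expr1n.
have hum' : conjc u * conjc m = - M%:C by rewrite -cJM hum cJN conjc_real.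
have iden : (cabs (3 * q * z - y1) ^+ 2 - L ^+ 2 * cabs (y2 * z - 3) ^+ 2)%:C =
   (r ^+ 2 * A + (cabs y1 ^+ 2 - 9 * L ^+ 2) + 6 * r * M)%:C.
  transitivity ((r%:C) ^+ 2 * (9 * q * conjc q - (L%:C) ^+ 2 * y2 * conjc y2) * (u * conjc u)
     + y1 * conjc y1 - 9 * (L%:C) ^+ 2 - 3 * r%:C * (u * m + conjc u * conjc m)).
    rewrite /z /m; pushC; ring.
  rewrite huu hum hum' /A; pushC; ring.
move/complexI: iden => iden.
have hden : y2 * z - 3 != 0.
  apply/eqP => h.
  have : cabs (y2 * z) = 3 by rewrite (subr0_eq h) cabs_nat.
  rewrite cabsM hz. nra.
have hdpos : 0 < cabs (y2 * z - 3) by exact: cabs_gt0.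
have hge : L <= cabs (Phi1 z y1 y2 q).
  rewrite /Phi1 (negbTE hne) cabsM cabsV ler_pdivlMr //.
  have := cabs_ge0 (3 * q * z - y1). nra.
have hsup : ((cabs (Phi1 z y1 y2 q))%:E <= Hinf_Phi1 y1 y2 q)%E.
  by apply: ereal_sup_ubound; exists z => //; rewrite /unit_disc /= hz.
have h1 : (L%:E <= Hinf_Phi1 y1 y2 q)%E by apply: le_trans hsup; rewrite lee_fin.
by have := lt_le_trans hinf h1; rewrite ltxx.
Qed.
Lemma lift01 : lift ord0 ord0 = 1 :> 'I_2. Proof. exact: val_inj. Qed.
Lemma vnorm2 (v : 'cV[C]_2) : vnorm v = Num.sqrt (cabs (v 0 0) ^+ 2 + cabs (v 1 0) ^+ 2).
Proof. by rewrite /vnorm !big_ord_recl big_ord0 addr0 lift01. Qed.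
Lemma mulv2 (a b c d : C) (v : 'cV[C]_2) :
  ((mx2 a b c d *m v) 0 0 = a * v 0 0 + b * v 1 0) /\ ((mx2 a b c d *m v) 1 0 = c * v 0 0 + d * v 1 0).
Proof. by rewrite !mxE !big_ord_recl !big_ord0 !mxE /= !addr0 lift01. Qed.

Lemma opnorm_lt1 (a b c d : C) :
  0 < 1 - cabs a ^+ 2 - cabs b ^+ 2 - cabs c ^+ 2 - cabs d ^+ 2 + cabs (a * d - b * c) ^+ 2 ->
  cabs (a * d - b * c) ^+ 2 <= 1 ->
  opnorm (mx2 a b c d) < 1.
Proof.
set dl := (1 - cabs a ^+ 2 - cabs b ^+ 2 - cabs c ^+ 2 - cabs d ^+ 2 + cabs (a * d - b * c) ^+ 2) => hdl hE.
set h11 := 1 - cabs a ^+ 2 - cabs c ^+ 2.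
set h22 := 1 - cabs b ^+ 2 - cabs d ^+ 2.
set h12 := conjc a * b + conjc c * d.
have hid : dl = h11 * h22 - cabs h12 ^+ 2.
  apply: complexI; rewrite /dl /h11 /h22 /h12; pushC; ring.
have hh : 0 < h11 /\ 0 < h22.
  have := cabs_ge0 h12; have := cabs_ge0 a; have := cabs_ge0 b; have := cabs_ge0 c; have := cabs_ge0 d.
  rewrite /h11 /h22 in hid *; move: hid hdl; rewrite /dl. nra.
case: hh => h11p h22p.
set eta := dl / (h11 + h22).
have heta : 0 < eta by rewrite divr_gt0 // addr_gt0.
have hetas : eta * (h11 + h22) = dl by rewrite /eta mulfVK // gt_eqF // addr_gt0.
have hp : 0 < h11 - eta.
  have : eta * (h11 + h22) < h11 * (h11 + h22).
    rewrite hetas hid.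
    have := cabs_ge0 h12. nra.
  have hs0 : 0 < h11 + h22 by exact: addr_gt0.
  rewrite ltr_pM2r // => H; lra.
clearbody eta.
have key : forall v : 'cV[C]_2, vnorm v = 1 -> vnorm (mx2 a b c d *m v) <= Num.sqrt (1 - eta).
  move=> v; rewrite !vnorm2; case: (mulv2 a b c d v) => -> ->.
  set v1 := v 0 0; set v2 := v 1 0.
  set N := cabs v1 ^+ 2 + cabs v2 ^+ 2 => hN.
  have hN1 : N = 1.
    have hN0 : 0 <= N by rewrite addr_ge0 // sqr_ge0.
    by rewrite -(sqr_sqrtr hN0) hN expr1n.
  apply: ler_wsqrtr.
  set p := h11 - eta.
  have iden : p * (N - (cabs (a * v1 + b * v2) ^+ 2 + cabs (c * v1 + d * v2) ^+ 2) - eta * N) =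
     cabs (p%:C * v1 - h12 * v2) ^+ 2 + (p * (h22 - eta) - cabs h12 ^+ 2) * cabs v2 ^+ 2.
    apply: complexI; rewrite /p /N /h11 /h22 /h12; pushC; ring.
  have hq : p * (h22 - eta) - cabs h12 ^+ 2 = eta ^+ 2.
    transitivity (h11 * h22 - cabs h12 ^+ 2 - eta * (h11 + h22) + eta ^+ 2); first by rewrite /p; ring.
    rewrite hetas hid; ring.
  rewrite hq in iden.
  have : 0 <= p * (N - (cabs (a * v1 + b * v2) ^+ 2 + cabs (c * v1 + d * v2) ^+ 2) - eta * N).
    rewrite iden; apply: addr_ge0; [exact: sqr_ge0 | apply: mulr_ge0; exact: sqr_ge0].
  rewrite pmulr_rge0 // hN1. lra.
have hs : Num.sqrt (1 - eta) < 1.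
  case: (lerP (1 - eta) 0) => h.
    by rewrite (ler0_sqrtr h) ltr01.
  rewrite -[X in _ < X]sqrtr1 ltr_sqrt; lra.
apply: le_lt_trans hs.
apply: ge_sup.
  exists (vnorm (mx2 a b c d *m cv2 1 0)); exists (cv2 1 0) => //=.
  rewrite vnorm2 !mxE /=.
  by rewrite expr1n !expr0n !addr0 sqrtr0 sqrtr1 expr1n expr0n addr0 sqrtr1.
by move=> x [v hv <-]; apply: key.
Qed.
Lemma theta_lt (th1 th2 c t : R) :
  th1 + th1^-1 = c -> th2 + th2^-1 = c -> 0 < t -> th1 < t -> t < th2 -> t + t^-1 < c.
Proof.
move=> h1 h2 ht ht1 ht2.
have Hsq : forall x : R, x != 0 -> x + x^-1 = c -> x ^+ 2 - c * x + 1 = 0.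
  move=> x hx <-; field; exact: hx.
case: (eqVneq th1 0) => [e1|n1].
  move: h1; rewrite e1 invr0 addr0 => hc.
  case: (eqVneq th2 0) => [e2|n2]; first by move: ht1 ht2; rewrite e1 e2; lra.
  have := Hsq _ n2 h2; rewrite -hc. nra.
case: (eqVneq th2 0) => [e2|n2].
  move: h2; rewrite e2 invr0 addr0 => hc.
  have := Hsq _ n1 h1; rewrite -hc. nra.
have q1 := Hsq _ n1 h1; have q2 := Hsq _ n2 h2.
have hcs : c = th1 + th2.
  have : (th1 - th2) * (th1 + th2 - c) = 0 by rewrite -(subrr 0) -{1}q1 -q2; ring.
  move/eqP; rewrite mulf_eq0 => /orP[|]; [rewrite subr_eq0 => /eqP e; move: ht1 ht2; rewrite e; lra | rewrite subr_eq0 => /eqP -> //].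
have hp : th1 * th2 = 1.
  have : th1 ^+ 2 - (th1 + th2) * th1 + 1 = 0 by rewrite -hcs.
  nra.
have : t ^+ 2 - c * t + 1 < 0.
  rewrite hcs -hp. nra.
move=> H.
have : t * (t + t^-1 - c) < 0.
  have -> : t * (t + t^-1 - c) = t ^+ 2 - c * t + 1 by field; rewrite gt_eqF.
  exact: H.
rewrite pmulr_rlt0 //; lra.
Qed.
End Helpers.

Theorem mainTheorem16 (R : realType) (lam y1 y2 q w : R[i]) (th1 th2 : R) :
  cabs lam < 1 -> lam != 0 ->
  tG3 y1 y2 q ->
  y1 * y2 != 9 * q ->
  cabs y2 <= cabs y1 ->
  (Hinf_Phi1 y1 y2 q < (cabs lam)%:E)%E ->
  w ^+ 2 = (y1 * y2 - 9 * q) / (9 * lam) ->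
  (let c : R := cabs lam / cabs (y1 * y2 - 9 * q) *
        (9 - (cabs y1) ^+ 2 / (cabs lam) ^+ 2 - (cabs y2) ^+ 2
           + 9 * (cabs q) ^+ 2 / (cabs lam) ^+ 2) in
   th1 + th1^-1 = c /\ th2 + th2^-1 = c) ->
  forall nu : R, 0 < nu -> th1 < nu ^+ 2 < th2 ->
    opnorm (Znu y1 y2 lam w nu) < 1 /\
    ~ posdef (KZ (Znu y1 y2 lam w nu) (cabs lam)).
Proof.
move=> hL1 hlam htg hne hY hinf hw hth nu hnu /andP[ht1 ht2].
move: hth => /= [hth1 hth2].
have hL : 0 < cabs lam by apply: cabs_gt0.
have hQL : cabs q <= cabs lam by apply: (Q_le_L _ _ _ _ (ltW hL) hL1 htg hne hY hinf).
have hDn : 0 < cabs (y1 * y2 - 9 * q) by apply: cabs_gt0; rewrite subr_eq0.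
have hW2 : cabs w ^+ 2 = cabs (y1 * y2 - 9 * q) / (9 * cabs lam).
  by rewrite expr2 -cabsM -expr2 hw cabsM cabsV cabsM cabs_nat.
have ht := theta_lt _ _ _ _ hth1 hth2 (exprn_gt0 2 hnu) ht1 ht2.
have hnu0 : ((nu%:C)%C : R[i]) != 0 by rewrite fmorph_eq0 gt_eqF.
have hlam' : (lam : R[i]) != 0 := hlam.
have hZ : Znu y1 y2 lam w nu = mx2 (y1 / (3 * lam)) ((nu%:C)%C * w) (((nu^-1)%:C)%C * w) (y2 / 3) by [].
have he : y1 / (3 * lam) * (y2 / 3) - (nu%:C)%C * w * (((nu^-1)%:C)%C * w) = q / lam.
  have -> : (nu%:C)%C * w * (((nu^-1)%:C)%C * w) = w ^+ 2.
    rewrite rCV; field; exact: hnu0.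
  rewrite hw; field; rewrite ?hlam //.
have hnu' : 0 < nu^-1 by rewrite invr_gt0.
have ha : cabs (y1 / (3 * lam)) = cabs y1 / (3 * cabs lam) by rewrite cabsM cabsV cabsM cabs_nat.
have hb : cabs ((nu%:C)%C * w) = nu * cabs w by rewrite cabsM cabs_real gtr0_norm.
have hc : cabs (((nu^-1)%:C)%C * w) = nu^-1 * cabs w by rewrite cabsM cabs_real gtr0_norm.
have hd : cabs (y2 / 3) = cabs y2 / 3 by rewrite cabsM cabsV cabs_nat.
have hE : cabs (q / lam) = cabs q / cabs lam by rewrite cabsM cabsV.
have hL0 : cabs lam != 0 by rewrite gt_eqF.
have hD0 : cabs (y1 * y2 - 9 * q) != 0 by rewrite gt_eqF.
have hn0 : nu != 0 by rewrite gt_eqF.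
have hdl : 0 < 1 - (cabs y1 / (3 * cabs lam)) ^+ 2 - (nu * cabs w) ^+ 2 - (nu^-1 * cabs w) ^+ 2
     - (cabs y2 / 3) ^+ 2 + (cabs q / cabs lam) ^+ 2.
  set cc := (X in _ < X) in ht.
  have -> : 1 - (cabs y1 / (3 * cabs lam)) ^+ 2 - (nu * cabs w) ^+ 2 - (nu^-1 * cabs w) ^+ 2
     - (cabs y2 / 3) ^+ 2 + (cabs q / cabs lam) ^+ 2 =
     (cabs (y1 * y2 - 9 * q) / (9 * cabs lam)) * (cc - (nu ^+ 2 + (nu ^+ 2)^-1)).
    by rewrite !exprMn hW2 /cc; field; rewrite hn0 hL0 hD0.
  apply: mulr_gt0; first by rewrite divr_gt0 // mulr_gt0.
  by rewrite subr_gt0.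
rewrite hZ; split.
  have := opnorm_lt1 (y1 / (3 * lam)) ((nu%:C)%C * w) (((nu^-1)%:C)%C * w) (y2 / 3).
  rewrite he ha hb hc hd hE. apply => //.
  rewrite expr_le1 ?divr_ge0 ?cabs_ge0 // ler_pdivrMr // mul1r //.
have := KZ_notpd (y1 / (3 * lam)) ((nu%:C)%C * w) (((nu^-1)%:C)%C * w) (y2 / 3) (cabs lam).
rewrite he ha hb hc hd hE. apply => //; first exact: ltW.
have -> : cabs lam ^+ 2 * (cabs y1 / (3 * cabs lam)) ^+ 2 = (cabs y1 / 3) ^+ 2.
  by field; rewrite hL0.
rewrite ler_pXn2r ?nnegrE ?divr_ge0 ?cabs_ge0 // ler_pM2r // invr_gt0.
Qed.
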